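(* Let $q\in\mathbb{N}_+$, let $p\ge 7$ be prime, $n\ge 2$, and let $\sigma\in\{2,3\}^{n-1}$ satisfy $\sum_{i=1}^{n-1}\sigma_i^q = p^q-1$ and $\|k\sigma\bmod p\|_q>\|\sigma\bmod p\|_q$ for every integer $k\not\equiv 0,\pm1\pmod p$; if $q\ge2$ assume moreover $4n-3>2p$. Let $\vec u=(1,\sigma)$, $W_i=p\vec e_i\in\mathbb{R}^n$, $\mathcal{L}_+=\operatorname{span}_{\mathbb{Z}}(W_1,\dots,W_n,\vec u)$, and let $R>p$ be a real number with $\mathcal{L}_+\cap\mathcal{B}_q(R) = \{\vec 0,\pm W_1,\dots,\pm W_n,\pm\vec u\}$. Let $\varepsilon>0$ satisfy $\varepsilon<\frac{R-p}{2}$ and $\varepsilon^q < \frac{p^q(R^q-p^q)}{((n-1)(p-1)+1)^q}$. Define in $\mathbb{R}^{n+1}$: $$\vec v_1=(W_1,\varepsilon),\quad \vec v_i=(W_i,2\varepsilon)\ (2\le i\le n),\quad \tilde{\vec u} = \tfrac1p\sum_{i=1}^n u_i\vec v_i = \Big(\vec u,\ \tfrac{2\sum_{i=1}^{n-1}\sigma_i+1}{p}\varepsilon\Big),$$ let $\tilde{\mathcal{L}}=\operatorname{span}_{\mathbb{Z}}(\vec v_1,\dots,\vec v_n,\tilde{\vec u})$ and $\mathcal{S}=\{\vec 0,\pm\vec v_1,\dots,\pm\vec v_n,\pm\tilde{\vec u}\}$. Then $\tilde{\mathcal{L}}$ is a lattice of rank $n$, $\tilde{\mathcal{L}}\cap\mathcal{B}_q(R)=\mathcal{S}$,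 and $\pm\vec v_1$ are the only shortest nonzero vectors of $\tilde{\mathcal{L}}$ (in $\ell^q$-norm).
   Context: $\|\vec x\|_q=(\sum_i|x_i|^q)^{1/q}$, $\mathcal{B}_q(r)=\{\vec x:\|\vec x\|_q<r\}$ (in the appropriate dimension). For real $\alpha$, $|\alpha|_p=\min_{z\in\mathbb{Z}}|\alpha-zp|$ and $\|\vec x\bmod p\|_q=(\sum_i|x_i|_p^q)^{1/q}$. $\vec e_i$ is the $i$-th standard unit vector; $(W_i,\varepsilon)$ denotes the vector of $\mathbb{R}^{n+1}$ obtained by appending the coordinate $\varepsilon$ to $W_i$. Such an $R$ exists since $\mathcal{L}_+$ is discrete and its nonzero vectors of norm $\le p$ are exactly $\pm W_i,\pm\vec u$. *)

(* Defs.v *)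
From HB Require Import structures.
From mathcomp Require Import all_boot all_order all_algebra.
From mathcomp Require Import all_classical all_reals all_analysis.
Set Implicit Arguments. Unset Strict Implicit. Unset Printing Implicit Defensive.
Import Order.TTheory GRing.Theory Num.Theory.
Local Open Scope classical_set_scope.
Local Open Scope ring_scope.

Section Defs.
Variable R : realType.

Definition lqnormf (q : nat) (m : nat) (x : 'I_m -> R) : R :=
  (\sum_(i < m) `|x i| ^+ q) `^ (q%:R^-1).

Definition lqnorm (q : nat) (m : nat) (x : 'rV[R]_m) : R :=
  lqnormf q (fun i => x 0 i).

Definition ballq (q : nat) (m : nat) (r : R) : set 'rV[R]_m :=
  [set x | lqnorm q x < r].

Definition modabs (p : nat) (a : R) : R :=
  inf [set `|a - z%:~R * p%:R| | z in [set: int]].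

Definition lqnorm_modp (q p : nat) (m : nat) (x : 'I_m -> R) : R :=
  (\sum_(i < m) (modabs p (x i)) ^+ q) `^ (q%:R^-1).

Definition zspan (I : finType) (m : nat) (f : I -> 'rV[R]_m) : set 'rV[R]_m :=
  [set x | exists c : I -> int, x = \sum_(i : I) f i *~ c i].

Definition lin_indep (I : finType) (m : nat) (f : I -> 'rV[R]_m) : Prop :=
  forall c : I -> R, \sum_(i : I) c i *: f i = 0 -> forall i, c i = 0.

Definition lattice_of_rank (m : nat) (L : set 'rV[R]_m) (r : nat) : Prop :=
  exists B : 'I_r -> 'rV[R]_m, lin_indep B /\ L = zspan B.

Definition ext (m : nat) (W : 'rV[R]_m) (e : R) : 'rV[R]_(m + 1) :=
  row_mx W (\row_(j < 1) e).

Definition Wv (n p : nat) (i : 'I_n) : 'rV[R]_n := p%:R *: delta_mx 0 i.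

End Defs.

Definition uvec (n : nat) (sigma : 'I_n.-1 -> nat) (i : 'I_n) : nat :=
  match nat_of_ord i with
  | 0 => 1
  | k.+1 => if insub k is Some j then sigma j else 0
  end.

(* Main.v *)
Require Import Defs.
From HB Require Import structures.
From mathcomp Require Import all_boot all_order all_algebra.
From mathcomp Require Import all_classical all_reals all_analysis.
From mathcomp Require Import ring lra zify.
Import Order.TTheory GRing.Theory Num.Theory.
Local Open Scope classical_set_scope.
Local Open Scope ring_scope.

Set Implicit Arguments. Unset Strict Implicit.

Lemma big_opt (V : nmodType) (I : finType) (F : option I -> V) :
  \sum_(o : option I) F o = F None + \sum_(i : I) F (Some i).
Proof.
rewrite (bigD1 None) //=; congr (_ + _).
case: (pickP (@predT I)) => [i0 _|I0].
  rewrite (reindex_onto Some (fun o => odflt i0 o)); last by case.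
  by apply: eq_bigl => i /=; rewrite eqxx.
rewrite !big_pred0 //.
by case=> // i; have := I0 i.
Qed.

Section H.
Variable R : realType.

Definition Pq (q m : nat) (x : 'rV[R]_m) : R := \sum_(i < m) `|x 0 i| ^+ q.

Lemma Pq_ge0 q m (x : 'rV[R]_m) : 0 <= Pq q x.
Proof. by apply: sumr_ge0 => i _; rewrite exprn_ge0. Qed.

Lemma Pq_row_mx q m k (A : 'rV[R]_m) (B : 'rV[R]_k) :
  Pq q (row_mx A B) = Pq q A + Pq q B.
Proof.
rewrite /Pq big_split_ord /=; congr (_ + _); apply: eq_bigr => i _.
  by rewrite row_mxEl.
by rewrite row_mxEr.
Qed.

Lemma Pq_opp q m (x : 'rV[R]_m) : Pq q (- x) = Pq q x.
Proof. by apply: eq_bigr => i _; rewrite mxE normrN. Qed.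

Lemma Pq_rV1 q (x : 'rV[R]_1) : Pq q x = `|x 0 0| ^+ q.
Proof. by rewrite /Pq big_ord1. Qed.

Lemma lqnormE q m (x : 'rV[R]_m) : lqnorm q x = Pq q x `^ (q%:R^-1).
Proof. by []. Qed.

Lemma powR_ltE (r a b : R) : 0 < r -> 0 <= a -> 0 <= b ->
  (a `^ r < b `^ r) = (a < b).
Proof.
move=> r0 a0 b0; apply/idP/idP; last by apply: gt0_ltr_powR.
apply: contraTT; rewrite -!leNgt => ba.
by apply: ge0_ler_powR => //; apply: ltW.
Qed.

Lemma powR_leE (r a b : R) : 0 < r -> 0 <= a -> 0 <= b ->
  (a `^ r <= b `^ r) = (a <= b).
Proof.
by move=> r0 a0 b0; rewrite !leNgt powR_ltE.
Qed.

Lemma powR_root (q : nat) (a : R) : (0 < q)%N -> 0 <= a ->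
  (a ^+ q) `^ (q%:R^-1) = a.
Proof.
move=> q0 a0; rewrite -powR_mulrn // -powRrM mulfV ?powRr1 //.
by rewrite pnatr_eq0 -lt0n.
Qed.

Lemma lqnorm_lt q m k (x : 'rV[R]_m) (y : 'rV[R]_k) : (0 < q)%N ->
  (lqnorm q x < lqnorm q y) = (Pq q x < Pq q y).
Proof.
move=> q0; rewrite !lqnormE powR_ltE ?Pq_ge0 //.
by rewrite invr_gt0 ltr0n.
Qed.

Lemma lqnorm_le q m k (x : 'rV[R]_m) (y : 'rV[R]_k) : (0 < q)%N ->
  (lqnorm q x <= lqnorm q y) = (Pq q x <= Pq q y).
Proof. by move=> q0; rewrite !leNgt lqnorm_lt. Qed.

Lemma lqnorm_ltr q m (x : 'rV[R]_m) (r : R) : (0 < q)%N -> 0 < r ->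
  (lqnorm q x < r) = (Pq q x < r ^+ q).
Proof.
move=> q0 r0; rewrite -{1}(powR_root q0 (ltW r0)) lqnormE powR_ltE ?Pq_ge0 //.
- by rewrite invr_gt0 ltr0n.
- by rewrite exprn_ge0 // ltW.
Qed.

Lemma superadd (q : nat) (a b : R) : (0 < q)%N -> 0 <= a -> 0 <= b ->
  a ^+ q + b ^+ q <= (a + b) ^+ q.
Proof.
case: q => [//|q] _ a0 b0; elim: q => [|q IH]; first by rewrite !expr1.
rewrite (exprS a) (exprS b) (exprS (a + b)).
apply: le_trans (ler_wpM2l (addr_ge0 a0 b0) IH).
rewrite mulrDl !mulrDr -!addrA lerD2l addrA lerDr.
by rewrite addr_ge0 // mulr_ge0 // exprn_ge0.
Qed.
End H.

Section Lat.
Variables (R : realType) (n p : nat) (ee : 'I_n -> R).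

Definition Ecol : 'cV[R]_n := \col_i ee i.
Definition Mx : 'M[R]_(n, n + 1) := row_mx ((p%:R : R)%:M) Ecol.

Lemma lsub_M (t : 'rV[R]_n) : lsubmx (t *m Mx) = p%:R *: t.
Proof. by rewrite /Mx mul_mx_row row_mxKl mul_mx_scalar. Qed.

Lemma Pq_M q (t : 'rV[R]_n) :
  Pq q (t *m Mx) = Pq q ((p%:R : R) *: t) + `|(t *m Ecol) 0 0| ^+ q.
Proof. by rewrite /Mx mul_mx_row Pq_row_mx mul_mx_scalar Pq_rV1. Qed.

Lemma ext_M i : ext (Wv R p i) (ee i) = delta_mx 0 i *m Mx.
Proof.
rewrite /Mx mul_mx_row mul_mx_scalar /ext /Wv; congr row_mx.
apply/rowP => j; rewrite -rowE.
rewrite [LHS]mxE.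
by rewrite [RHS]mxE /Ecol mxE.
Qed.

Lemma M_inj (t t' : 'rV[R]_n) : p != 0%N -> t *m Mx = t' *m Mx -> t = t'.
Proof.
move=> p0 /(congr1 lsubmx); rewrite !lsub_M => /(congr1 ( *:%R (p%:R^-1))).
by rewrite !scalerA mulVf ?pnatr_eq0 // !scale1r.
Qed.

Lemma scalez_M (A : 'rV[R]_n) (k : int) : (A *~ k) *m Mx = (A *m Mx) *~ k.
Proof. by rewrite -[A *~ k]scaler_int -[(A *m Mx) *~ k]scaler_int scalemxAl. Qed.

Lemma Ecol_delta i : (delta_mx 0 i *m Ecol) (0 : 'I_1) (0 : 'I_1) = ee i.
Proof. by rewrite -rowE mxE /Ecol mxE. Qed.

End Lat.

Section ZS.
Variable R : realType.

Lemma zspan_gen (I : finType) m (f : I -> 'rV[R]_m) i : zspan f (f i).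
Proof.
exists (fun j => (j == i)%:Z); rewrite (bigD1 i) //= eqxx mulr1z big1 ?addr0 //.
by move=> j /negbTE ->; rewrite mulr0z.
Qed.

Lemma zspan_opp (I : finType) m (f : I -> 'rV[R]_m) x : zspan f x -> zspan f (- x).
Proof.
case=> c ->; exists (fun j => - c j); rewrite -sumrN; apply: eq_bigr => j _.
by rewrite mulrNz.
Qed.

Lemma zspan_0 (I : finType) m (f : I -> 'rV[R]_m) : zspan f 0.
Proof. by exists (fun _ => 0); rewrite big1 // => j _; rewrite mulr0z. Qed.

Lemma Pq0 q m : (0 < q)%N -> Pq q (0 : 'rV[R]_m) = 0.
Proof.
by move=> q0; rewrite /Pq big1 // => i _; rewrite mxE normr0 expr0n gtn_eqF.
Qed.
End ZS.

Unset Implicit Arguments. Set Strict Implicit.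

Theorem lemma4p6 (R : realType) (q p n : nat) (sigma : 'I_n.-1 -> nat)
  (Rad eps : R) :
  (0 < q)%N -> prime p -> (7 <= p)%N -> (2 <= n)%N ->
  (forall i, sigma i = 2%N \/ sigma i = 3%N) ->
  (\sum_(i < n.-1) sigma i ^ q = p ^ q - 1)%N ->
  (forall k : int,
     (k != 0 %[mod p%:Z])%Z -> (k != 1 %[mod p%:Z])%Z -> (k != -1 %[mod p%:Z])%Z ->
     lqnorm_modp q p (fun i => (k * (sigma i)%:Z)%:~R : R)
       > lqnorm_modp q p (fun i => (sigma i)%:R : R)) ->
  ((2 <= q)%N -> (2 * p < 4 * n - 3)%N) ->
  p%:R < Rad ->
  (let u : 'rV[R]_n := \row_i (uvec sigma i)%:R in
   let gens : option 'I_n -> 'rV[R]_n :=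
     fun o => if o is Some i then Wv R p i else u in
   zspan gens `&` ballq q Rad =
     [set 0] `|` [set x | exists i, x = Wv R p i \/ x = - Wv R p i]
             `|` [set u; - u]) ->
  0 < eps -> eps < (Rad - p%:R) / 2 ->
  eps ^+ q < p%:R ^+ q * (Rad ^+ q - p%:R ^+ q)
               / (((n.-1 * p.-1).+1)%:R) ^+ q ->
  let v : 'I_n -> 'rV[R]_(n + 1) :=
    fun i => ext (Wv R p i) (if (i : nat) == 0%N then eps else 2 * eps) in
  let ut : 'rV[R]_(n + 1) :=
    p%:R^-1 *: \sum_(i < n) (uvec sigma i)%:R *: v i in
  let Lt : set 'rV[R]_(n + 1) :=
    zspan (fun o : option 'I_n => if o is Some i then v i else ut) in
  let S : set 'rV[R]_(n + 1) :=
    [set 0] `|` [set x | exists i, x = v i \/ x = - v i] `|` [set ut; - ut] in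
  forall i0 : 'I_n, (i0 : nat) = 0%N ->
  [/\ lattice_of_rank Lt n,
      Lt `&` ballq q Rad = S &
      [set x | Lt x /\ x != 0 /\
               forall y, Lt y -> y != 0 -> lqnorm q x <= lqnorm q y]
        = [set v i0; - v i0]].
Proof.
move=> q0 pr p7; case: n sigma => [|n] sigma; first by [].
move=> n2 s23 sumq _ q2 pRad Hball e0 eR eq v ut Lt S i0 i00.
pose pR : R := p%:R.
pose ee : 'I_n.+1 -> R := fun i => if (i : nat) == 0%N then eps else 2 * eps.
pose M := Mx p ee.
pose uR : 'rV[R]_n.+1 := \row_i (uvec sigma i)%:R.
pose Tu := pR^-1 *: uR.
pose gens := fun o : option 'I_n.+1 => if o is Some i then Wv R p i else uR.
have HB : zspan gens `&` ballq q Rad =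
     [set 0] `|` [set x | exists i, x = Wv R p i \/ x = - Wv R p i]
             `|` [set uR; - uR] := Hball.
have p0 : (p != 0)%N by rewrite -lt0n prime_gt0.
have pR0 : 0 < pR by rewrite ltr0n lt0n.
have Hv : forall i, v i = delta_mx 0 i *m M by move=> i; apply: ext_M.
have Hut : ut = Tu *m M.
  rewrite /ut /Tu -scalemxAl; congr (_ *: _).
  rewrite [uR]row_sum_delta mulmx_suml; apply: eq_bigr => i _.
  by rewrite Hv -scalemxAl mxE.
have Hvn : forall i, - v i = (- delta_mx 0 i) *m M by move=> i; rewrite mulNmx Hv.
have Hutn : - ut = (- Tu) *m M by rewrite mulNmx Hut.
have uS : forall k : 'I_n, uvec sigma (lift ord0 k) = sigma k.
  by move=> k; rewrite /uvec /= valK.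
pose Ssum := (\sum_(k < n) sigma k)%N.
pose K := (1 + 2 * Ssum)%N.
have hS2 : (\sum_(k < n) 2 <= Ssum)%N by apply: leq_sum => k _; case: (s23 k) => ->.
have hS3 : (Ssum <= \sum_(k < n) 3)%N by apply: leq_sum => k _; case: (s23 k) => ->.
rewrite sum_nat_const card_ord in hS2; rewrite sum_nat_const card_ord in hS3.
have hu : (1 + \sum_(k < n) sigma k ^ q)%N = (p ^ q)%N.
  by rewrite sumq subnKC // expn_gt0 prime_gt0.
have hK1 : (p < K)%N.
  case: (ltnP 1 q) => [/q2|q1]; first by lia.
  have q1' : q = 1%N by lia.
  have : Ssum = (p ^ q - 1)%N.
    by rewrite -sumq q1'; apply: eq_bigr => k _; rewrite expn1.
  by rewrite q1' expn1; lia.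
have hK2 : (K <= (n * p.-1).+1)%N.
  have : (6 * n <= n * p.-1)%N by nia.
  by lia.
pose s := (Tu *m Ecol ee) 0 0.
have hs : s = eps * K%:R / pR.
  rewrite /s /Tu -scalemxAl mxE [(uR *m _) 0 0]mxE big_ord_recl.
  rewrite [uR 0 _]mxE [Ecol ee _ _]mxE /=.
  have -> : \sum_(i < n) uR 0 (lift ord0 i) * Ecol ee (lift ord0 i) 0
          = (Ssum%:R : R) * (2 * eps).
    rewrite /Ssum natr_sum mulr_suml; apply: eq_bigr => k _.
    by rewrite !mxE uS.
  have -> : uvec sigma ord0 = 1%N by [].
  have -> : ee ord0 = eps by [].
  rewrite /K natrD natrM /=; field.
  by rewrite gt_eqF.
have PW : forall i : 'I_n.+1, Pq q (pR *: delta_mx 0 i) = pR ^+ q.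
  move=> i; rewrite /Pq (bigD1 i) //= big1 => [|j ji].
    by rewrite !mxE !eqxx mulr1 addr0 ger0_norm // ltW.
  by rewrite !mxE (negbTE ji) andbF mulr0 normr0 expr0n gtn_eqF.
have PU : Pq q uR = pR ^+ q.
  rewrite /Pq big_ord_recl.
  have -> : \sum_(i < n) `|uR 0 (lift ord0 i)| ^+ q
          = ((\sum_(i < n) sigma i ^ q)%N%:R : R).
    by rewrite natr_sum; apply: eq_bigr => k _; rewrite !mxE uS normr_nat natrX.
  rewrite mxE.
  have -> : uvec sigma ord0 = 1%N by [].
  by rewrite normr1 expr1n /pR -natrX -hu natrD.
have Pv : forall i, Pq q (v i) = pR ^+ q + `|ee i| ^+ q.
  by move=> i; rewrite Hv Pq_M PW Ecol_delta.
have s0 : 0 <= s by rewrite hs; apply: divr_ge0; [apply: mulr_ge0; [apply: ltW|] |apply: ltW].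
have Put : Pq q ut = pR ^+ q + s ^+ q.
  rewrite Hut Pq_M /Tu scalerA mulfV ?gt_eqF // scale1r PU.
  by rewrite -/s ger0_norm.
have ee0 : forall i : 'I_n.+1, (i : nat) = 0%N -> ee i = eps.
  by move=> i h; rewrite /ee h.
have eeS : forall i : 'I_n.+1, (i : nat) != 0%N -> ee i = 2 * eps.
  by move=> i h; rewrite /ee (negbTE h).
have eeb : forall i : 'I_n.+1, 0 < ee i <= 2 * eps.
  move=> i; rewrite /ee; case: ifP => _; apply/andP; split; lra.
have hB1 : forall i, pR ^+ q + `|ee i| ^+ q < Rad ^+ q.
  move=> i; have /andP[e1 e2] := eeb i; rewrite gtr0_norm //.
  apply: le_lt_trans (superadd q0 (ltW pR0) (ltW e1)) _.
  have h1 : pR + ee i < Rad by rewrite /pR; lra.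
  by rewrite ltrXn2r -?lt0n // addr_ge0 // ltW.
have hs1 : eps < s.
  rewrite hs ltr_pdivlMr // ltr_pM2l // ltr_nat; exact: hK1.
have hs2 : s ^+ q < Rad ^+ q - pR ^+ q.
  pose B := eps * ((n * p.-1).+1)%:R / pR.
  have B0 : 0 <= B by rewrite /B divr_ge0 ?mulr_ge0 // ltW.
  have h1 : s ^+ q <= B ^+ q.
    apply: lerXn2r; rewrite ?nnegrE //.
    rewrite hs /B ler_pM2r ?invr_gt0 // ler_pM2l // ler_nat; exact: hK2.
  apply: le_lt_trans h1 _.
  have eq' := eq; rewrite ltr_pdivlMr ?exprn_gt0 ?ltr0n // in eq'.
  rewrite /B !exprMn exprVn ltr_pdivrMr ?exprn_gt0 //.
  have key : eps ^+ q * ((n * p.-1).+1)%:R ^+ q < pR ^+ q * (Rad ^+ q - pR ^+ q) := eq'.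
  lra.
have hB2 : pR ^+ q + s ^+ q < Rad ^+ q by lra.
have C1 : forall i : 'I_n.+1, (i : nat) != 0%N -> Pq q (v i0) < Pq q (v i).
  move=> i h; rewrite !Pv ee0 // eeS // ltrD2l !gtr0_norm ?mulr_gt0 //.
  by rewrite ltrXn2r -?lt0n ?ltW //; lra.
have C2 : Pq q (v i0) < Pq q ut.
  rewrite Pv Put ee0 // ltrD2l gtr0_norm //.
  by rewrite ltrXn2r -?lt0n ?ltW.
have C3 : forall i : 'I_n.+1, Pq q (v i0) <= Pq q (v i).
  move=> i; case: (eqVneq (i : nat) 0%N) => h; last by apply/ltW/C1.
  by rewrite !Pv !ee0.
pose Tg := fun o : option 'I_n.+1 => if o is Some i then delta_mx 0 i else Tu.
have LtT : forall x, Lt x -> exists T, x = T *m M /\ zspan gens (pR *: T).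
  move=> x [c ->]; exists (\sum_o Tg o *~ c o); split.
    rewrite mulmx_suml; apply: eq_bigr => -[i|] _ /=.
      by rewrite scalez_M -Hv.
    by rewrite scalez_M -Hut.
  exists c; rewrite scaler_sumr; apply: eq_bigr => -[i|] _ /=.
    by rewrite -scalerMzr.
  by rewrite -scalerMzr /Tu scalerA mulfV ?gt_eqF // scale1r.
have Rad0 : 0 < Rad by apply: lt_trans pRad.
have Lv : forall i, Lt (v i) by move=> i; apply: (zspan_gen _ (Some i)).
have Lut : Lt ut by apply: (zspan_gen _ None).
have Sball : Lt `&` ballq q Rad = S.
  apply/seteqP; split => x.
    move=> [Ltx Bx]; rewrite /ballq /= lqnorm_ltr // in Bx.
    have [T [xT HT]] := LtT x Ltx.
    have HY : (zspan gens `&` ballq q Rad) (pR *: T).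
      split => //; rewrite /ballq /= lqnorm_ltr //.
      by apply: le_lt_trans Bx; rewrite xT Pq_M lerDl exprn_ge0.
    rewrite HB in HY.
    have eT : T = pR^-1 *: (pR *: T) by rewrite scalerA mulVf ?gt_eqF ?scale1r.
    rewrite xT eT; move: HY => [[->|[i [->|->]]]|[->|->]].
    - by rewrite scaler0 mul0mx; left; left.
    - rewrite /Wv scalerA mulVf ?gt_eqF // scale1r -Hv.
      by left; right; exists i; left.
    - rewrite /Wv scalerN scalerA mulVf ?gt_eqF // scale1r -Hvn.
      by left; right; exists i; right.
    - by rewrite -/Tu -Hut; right; left.
    - by rewrite scalerN -/Tu -Hutn; right; right.
  have bl : forall y, Pq q y < Rad ^+ q -> ballq q Rad y.
    by move=> y hy; rewrite /ballq /= lqnorm_ltr.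
  move=> [[->|[i [->|->]]]|[->|->]]; split.
  - exact: zspan_0.
  - by apply: bl; rewrite Pq0 // exprn_gt0.
  - exact: Lv.
  - by apply: bl; rewrite Pv.
  - exact/zspan_opp/Lv.
  - by apply: bl; rewrite Pq_opp Pv.
  - exact: Lut.
  - by apply: bl; rewrite Put.
  - exact/zspan_opp/Lut.
  - by apply: bl; rewrite Pq_opp Put.
have inS : forall y, Lt y -> Pq q y < Rad ^+ q -> S y.
  move=> y Ly hy; rewrite -Sball; split => //.
  by rewrite /ballq /= lqnorm_ltr.
have Pv0 : 0 < Pq q (v i0).
  by rewrite Pv; apply: (lt_le_trans (exprn_gt0 q pR0)); rewrite lerDl exprn_ge0.
have v0 : v i0 != 0.
  by apply/eqP => h; move: Pv0; rewrite h Pq0 // ltxx.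
have Bv0 : Pq q (v i0) < Rad ^+ q by rewrite Pv.
split; [| exact: Sball |]; last first.
- apply/seteqP; split => x.
    move=> [Ltx [x0 Hmin]].
    have Hle := Hmin (v i0) (Lv i0) v0; rewrite lqnorm_le // in Hle.
    have := inS x Ltx (le_lt_trans Hle Bv0).
    move=> [[xe|[i [xe|xe]]]|[xe|xe]]; rewrite xe in Hle x0 *.
    + by rewrite eqxx in x0.
    + case: (eqVneq (i : nat) 0%N) => h.
        by left; congr v; apply: val_inj; rewrite /= h i00.
      by have := C1 i h; rewrite ltNge Hle.
    + rewrite Pq_opp in Hle; case: (eqVneq (i : nat) 0%N) => h.
        by right; congr (- v _); apply: val_inj; rewrite /= h i00.
      by have := C1 i h; rewrite ltNge Hle.
    + by move: C2; rewrite ltNge Hle.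
    + by move: C2; rewrite ltNge -(Pq_opp q ut) Hle.
  have key : forall y, Lt y -> y != 0 -> Pq q (v i0) <= Pq q y.
    move=> y Ly y0; case: (ltP (Pq q y) (Rad ^+ q)) => hy; last first.
      exact: ltW (lt_le_trans Bv0 hy).
    move: (inS y Ly hy) y0 => [[->|[i [->|->]]]|[->|->]].
    + by rewrite eqxx.
    + by move=> _; apply: C3.
    + by move=> _; rewrite Pq_opp; apply: C3.
    + by move=> _; apply: ltW.
    + by move=> _; rewrite Pq_opp; apply: ltW.
  move=> [->|->]; split.
  + exact: Lv.
  + by split => // y Ly y0; rewrite lqnorm_le // key.
  + exact/zspan_opp/Lv.
  + split; first by rewrite oppr_eq0.
    by move=> y Ly y0; rewrite lqnorm_le // Pq_opp key.
pose TB := fun i : 'I_n.+1 => if (i : nat) == 0%N then Tu else delta_mx 0 i.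
have TuE : forall j : 'I_n.+1, Tu 0 j = pR^-1 * (uvec sigma j)%:R.
  by move=> j; rewrite !mxE.
have EB : forall (d : 'I_n.+1 -> R) (j : 'I_n.+1),
    (\sum_i d i *: TB i) 0 j = d ord0 * Tu 0 j + (if (j : nat) == 0%N then 0 else d j).
  move=> d j; rewrite summxE (bigD1 ord0) //= mxE; congr (_ + _).
  rewrite (eq_bigr (fun i => d i * (j == i)%:R)); last first.
    move=> i hi; have hi' : ((i : nat) == 0%N) = false := negbTE hi.
    by rewrite mxE /TB hi' mxE eqxx.
  case: ifP => hj.
    rewrite big1 // => i hi; suff -> : (j == i) = false by rewrite mulr0.
    apply/negbTE; apply: contra hi => /eqP <-; exact: hj.
  have hj' : j != ord0 by rewrite -(inj_eq val_inj) /= hj.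
  rewrite (bigD1 j) //= eqxx mulr1 big1 ?addr0 // => i /andP[_ hi].
  by rewrite eq_sym (negbTE hi) mulr0.
have EG : forall (d : option 'I_n.+1 -> R) (j : 'I_n.+1),
    (\sum_o d o *: Tg o) 0 j = d None * Tu 0 j + d (Some j).
  move=> d j; rewrite big_opt mxE summxE /= [(_ *: Tu) 0 j]mxE; congr (_ + _).
  rewrite (bigD1 j) //= !mxE !eqxx mulr1 big1 ?addr0 // => i hi.
  by rewrite !mxE eq_sym (negbTE hi) mulr0.
have sumB : forall c : 'I_n.+1 -> int,
    \sum_i (TB i *m M) *~ c i = (\sum_i (c i)%:~R *: TB i) *m M.
  by move=> c; rewrite mulmx_suml; apply: eq_bigr => i _; rewrite -scalemxAl scaler_int.
have sumG : forall c : option 'I_n.+1 -> int,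
    \sum_o (if o is Some i then v i else ut) *~ c o
      = (\sum_o (c o)%:~R *: Tg o) *m M.
  move=> c; rewrite mulmx_suml; apply: eq_bigr => -[i|] _ /=.
    by rewrite -scalemxAl scaler_int Hv.
  by rewrite -scalemxAl scaler_int Hut.
exists (fun i => TB i *m M); split.
  move=> c hc i.
  have h0 : (\sum_i c i *: TB i) *m M = 0.
    by rewrite mulmx_suml -[RHS]hc; apply: eq_bigr => k _; rewrite scalemxAl.
  rewrite -(mul0mx _ M) in h0.
  have {h0} h0 := M_inj p0 h0.
  have hE : forall j, c ord0 * Tu 0 j + (if (j : nat) == 0%N then 0 else c j) = 0.
    by move=> j; rewrite -EB h0 mxE.
  have c0 : c ord0 = 0.
    have := hE ord0; rewrite /= addr0 TuE.
    have -> : uvec sigma ord0 = 1%N by [].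
    move/eqP; rewrite mulf_eq0 mulr1 invr_eq0 (gt_eqF pR0) orbF.
    by move/eqP.
  case: (eqVneq (i : nat) 0%N) => hi.
    by have -> : i = ord0 by apply: val_inj.
  by have := hE i; rewrite c0 mul0r add0r (negbTE hi).
apply/seteqP; split => x [c ->].
  exists (fun i : 'I_n.+1 => if (i : nat) == 0%N then c None + p%:Z * c (Some ord0)
          else c (Some i) - c (Some ord0) * (uvec sigma i)%:Z).
  rewrite sumB sumG; congr (_ *m _); apply/rowP => j.
  rewrite EB EG /= TuE; case: ifP => hj.
    have -> : j = ord0 by apply: val_inj; apply/eqP.
    have -> : uvec sigma ord0 = 1%N by [].
    rewrite /= intrD intrM -pmulrn /pR; field.
    by rewrite pnatr_eq0.
  rewrite /= hj !(intrD, intrM, intrN) -!pmulrn /pR; field.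
  by rewrite pnatr_eq0.
exists (fun o : option 'I_n.+1 => if o is Some i then (if (i : nat) == 0%N then 0 else c i) else c ord0).
rewrite sumB sumG; congr (_ *m _); apply/rowP => j.
rewrite EB EG /=; case: ifP => //; by rewrite mulr0z.
Qed.
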